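(* For the games $\mathcal G$ and $\mathcal G^{\rm sm}$: (a) a GNE of $\mathcal G$ always exists; (b) a GNE of $\mathcal G^{\rm sm}$ exists provided $\mathcal P\neq\emptyset$; (c) if $\mathbf x^\star$ is a GNE of $\mathcal G$ satisfying constraint (C$_q$) for all $q=1,\dots,Q$, then $\mathbf x^\star$ is a GNE of $\mathcal G^{\rm sm}$; (d) if $\mathbf x^\star$ is a GNE of $\mathcal G^{\rm sm}$, then $\mathbf x^\star$ is a GNE of $\mathcal G$.
   Context: Fix integers $Q,J\ge1$, noise power $\sigma^2>0$, budgets $P_q>0$ ($q=1,\dots,Q$) and $P^{J}_j>0$ ($j=1,\dots,J$), and positive channel gains $H^{SD}_{qq},H^{SE}_{qe},H^{JD}_{jq},H^{JE}_{je}$. Variables: $p_q\ge0$ (power of source $q$) and $p^J_{jq}\ge0$ (power of jammer $j$ on the channel of user $q$); $\mathbf p^J_q=(p^J_{jq})_{j=1}^J$, $\mathbf x_q=(p_q,\mathbf p^J_q)$, $\mathbf x=(\mathbf x_q)_{q=1}^Q$, $\mathbf p^J_{-q}=(\mathbf p^J_r)_{r\ne q}$. Define $r_{qq}(\mathbf x_q)=\log\big(1+\frac{H^{SD}_{qq}p_q}{\sigma^2+\sum_jH^{JD}_{jq}p^J_{jq}}\big)$, $r_{qe}(\mathbf x_q)=\log\big(1+\frac{H^{SE}_{qe}p_q}{\sigma^2+\sum_jH^{JE}_{je}p^J_{jq}}\big)$, $\tilde r^s_q=r_{qq}-r_{qe}$, $r^s_q=\max(0,\tilde r^s_q)$. Constraint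 (C$_q$): $\sum_{j=1}^J(H^{SD}_{qq}H^{JE}_{je}-H^{SE}_{qe}H^{JD}_{jq})p^J_{jq}+(H^{SD}_{qq}-H^{SE}_{qe})\sigma^2\ge0$. $\mathcal P_q(\mathbf p^J_{-q})=\{\mathbf x_q\ge\mathbf 0: p_q\le P_q,\ \sum_{r=1}^Qp^J_{jr}\le P^J_j\ \forall j\}$ (with $p^J_{jr}$, $r\neq q$, fixed by $\mathbf p^J_{-q}$); $\mathcal P^{\rm sm}_q(\mathbf p^J_{-q})=\{\mathbf x_q\in\mathcal P_q(\mathbf p^J_{-q}):\text{(C}_q\text{) holds}\}$; $\mathcal P=\{\mathbf x\ge\mathbf 0: p_q\le P_q \text{ and (C}_q\text{) for all }q,\ \sum_{r}p^J_{jr}\le P^J_j\ \forall j\}$. Game $\mathcal G$: player $q$ maximizes $r^s_q(\mathbf x_q)$ over $\mathbf x_q\in\mathcal P_q(\mathbf p^J_{-q})$; game $\mathcal G^{\rm sm}$: player $q$ maximizes $\tilde r^s_q(\mathbf x_q)$ over $\mathcal P^{\rm sm}_q(\mathbf p^J_{-q})$. A GNE of $\mathcal G$ is $\mathbf x^\star$ such that for all $q$: $\mathbf x^\star_q\in\mathcal P_q(\mathbf p^{J\star}_{-q})$ and $r^s_q(\mathbf x^\star_q)\ge r^s_q(\mathbf x_q)$ for all $\mathbf x_q\in\mathcal P_q(\mathbf p^{J\star}_{-q})$. A GNE of $\mathcal G^{\rm sm}$ is defined analogously with $\tilde r^s_q$ and $\mathcal P^{\rm sm}_q$. *)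

(* Defs.v *)
From Stdlib Require Import Reals Lra Arith.
Open Scope R_scope.

(* Indices are 0-based: users q = 0..Q-1, jammers j = 0..J-1. *)
Fixpoint sumR (n : nat) (f : nat -> R) : R :=
  match n with O => 0 | S m => sumR m f + f m end.

Record sys := mkSys {
  Q : nat; J : nat;
  sigma2 : R;
  Pmax : nat -> R;
  PJmax : nat -> R;
  HSD : nat -> R;
  HSE : nat -> R;
  HJD : nat -> nat -> R;    (* HJD j q = H^JD_jq *)
  HJE : nat -> R
}.

(* A strategy of player q is x_q = (a, b) with a = p_q, b j = p^J_{jq}.
   A profile is (p, pJ) with pJ j q = p^J_{jq}. *)
Definition r_qq (s : sys) (q : nat) (a : R) (b : nat -> R) : R :=
  ln (1 + HSD s q * a / (sigma2 s + sumR (J s) (fun j => HJD s j q * b j))).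
Definition r_qe (s : sys) (q : nat) (a : R) (b : nat -> R) : R :=
  ln (1 + HSE s q * a / (sigma2 s + sumR (J s) (fun j => HJE s j * b j))).
Definition rs_tilde (s : sys) q a b : R := r_qq s q a b - r_qe s q a b.
Definition rs (s : sys) q a b : R := Rmax 0 (rs_tilde s q a b).

Definition Cq (s : sys) (q : nat) (b : nat -> R) : Prop :=
  sumR (J s) (fun j => (HSD s q * HJE s j - HSE s q * HJD s j q) * b j)
  + (HSD s q - HSE s q) * sigma2 s >= 0.

Definition feas (s : sys) (pJ : nat -> nat -> R) (q : nat) (a : R) (b : nat -> R) : Prop :=
  0 <= a /\ a <= Pmax s q /\
  (forall j, (j < J s)%nat ->
     0 <= b j /\
     sumR (Q s) (fun r => if Nat.eqb r q then b j else pJ j r) <= PJmax s j).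

Definition feas_sm (s : sys) pJ q a b : Prop := feas s pJ q a b /\ Cq s q b.

Definition in_P (s : sys) (p : nat -> R) (pJ : nat -> nat -> R) : Prop :=
  (forall q, (q < Q s)%nat -> 0 <= p q /\ p q <= Pmax s q /\ Cq s q (fun j => pJ j q)) /\
  (forall j, (j < J s)%nat ->
     (forall r, (r < Q s)%nat -> 0 <= pJ j r) /\ sumR (Q s) (pJ j) <= PJmax s j).

Definition GNE_G (s : sys) (p : nat -> R) (pJ : nat -> nat -> R) : Prop :=
  forall q, (q < Q s)%nat ->
    feas s pJ q (p q) (fun j => pJ j q) /\
    forall a b, feas s pJ q a b -> rs s q a b <= rs s q (p q) (fun j => pJ j q).

Definition GNE_Gsm (s : sys) (p : nat -> R) (pJ : nat -> nat -> R) : Prop :=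
  forall q, (q < Q s)%nat ->
    feas_sm s pJ q (p q) (fun j => pJ j q) /\
    forall a b, feas_sm s pJ q a b ->
      rs_tilde s q a b <= rs_tilde s q (p q) (fun j => pJ j q).

Definition admissible (s : sys) : Prop :=
  (1 <= Q s)%nat /\ (1 <= J s)%nat /\ 0 < sigma2 s /\
  (forall q, (q < Q s)%nat -> 0 < Pmax s q /\ 0 < HSD s q /\ 0 < HSE s q) /\
  (forall j, (j < J s)%nat -> 0 < PJmax s j /\ 0 < HJE s j /\
     forall q, (q < Q s)%nat -> 0 < HJD s j q).

(* Main.v *)
Require Import Defs.
From Stdlib Require Import Reals Lra Lia Arith.
From mathcomp Require Import all_boot all_order all_algebra.
From mathcomp Require Import boolp classical_sets reals topology normedtype matrix_normedtype derive.
From mathcomp Require Import Rstruct Rstruct_topology.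
Import Order.TTheory GRing.Theory Num.Theory.
Import numFieldNormedType.Exports.
Open Scope R_scope.

Fixpoint prodR (n : nat) (f : nat -> R) : R :=
  match n with O => 1 | S m => Rmult (prodR m f) (f m) end.

Lemma sumR_ext n f g : (forall j, (j < n)%coq_nat -> f j = g j) -> sumR n f = sumR n g.
Proof.
induction n as [|n IH]; intros H; simpl; [reflexivity|].
erewrite IH by (intros; apply H; lia). erewrite (H n) by lia. reflexivity.
Qed.

Lemma prodR_ext n f g : (forall j, (j < n)%coq_nat -> f j = g j) -> prodR n f = prodR n g.
Proof.
induction n as [|n IH]; intros H; simpl; [reflexivity|].
erewrite IH by (intros; apply H; lia). erewrite (H n) by lia. reflexivity.
Qed.

Lemma sumR_nonneg n f : (forall j, (j < n)%coq_nat -> 0 <= f j) -> 0 <= sumR n f.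
Proof.
induction n as [|n IH]; intros H; simpl; [lra|].
assert (0 <= f n) by (apply H; lia).
assert (0 <= sumR n f) by (apply IH; intros; apply H; lia). lra.
Qed.

Lemma prodR_pos n f : (forall j, (j < n)%coq_nat -> 0 < f j) -> 0 < prodR n f.
Proof.
induction n as [|n IH]; intros H; simpl; [lra|].
apply Rmult_lt_0_compat; [apply IH; intros; apply H; lia | apply H; lia].
Qed.

Lemma sumR_ge_term n f q : (forall j, (j < n)%coq_nat -> 0 <= f j) -> (q < n)%coq_nat ->
  f q <= sumR n f.
Proof.
induction n as [|n IH]; intros H Hq; simpl; [lia|].
destruct (Nat.eq_dec q n) as [->|Hne].
- assert (0 <= sumR n f) by (apply sumR_nonneg; intros; apply H; lia). lra.
- assert (f q <= sumR n f) by (apply IH; [intros; apply H; lia | lia]).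
  assert (0 <= f n) by (apply H; lia). lra.
Qed.

Lemma sumR_lin n c d f g b :
  sumR n (fun j => (c * f j - d * g j) * b j) =
  c * sumR n (fun j => f j * b j) - d * sumR n (fun j => g j * b j).
Proof. induction n as [|n IH]; simpl; [ring|]. erewrite IH. ring. Qed.

Lemma prodR_split n f q : (q < n)%coq_nat ->
  prodR n f = f q * prodR n (fun r => if Nat.eqb r q then 1 else f r).
Proof.
induction n as [|n IH]; intros Hq; simpl; [lia|].
destruct (Nat.eq_dec q n) as [->|Hne].
- erewrite Nat.eqb_refl.
  erewrite (prodR_ext n (fun r => if Nat.eqb r n then 1 else f r) f).
  + ring.
  + intros j Hj. destruct (Nat.eqb_spec j n); [lia|reflexivity].
- erewrite IH by lia.
  destruct (Nat.eqb_spec n q); [lia|]. ring.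
Qed.

Lemma ln_le x y : 0 < x -> x <= y -> ln x <= ln y.
Proof.
intros Hx Hxy. destruct (Rle_lt_or_eq_dec _ _ Hxy) as [H|H].
- left; apply ln_increasing; assumption.
- erewrite H; right; reflexivity.
Qed.

Lemma lnle2 x y x' y' : 0 < x -> 0 < y -> 0 < x' -> 0 < y' -> x * y' <= x' * y ->
  ln x - ln y <= ln x' - ln y'.
Proof.
intros. assert (ln (x * y') <= ln (x' * y)).
{ apply ln_le; [apply Rmult_lt_0_compat; lra | exact H3]. }
erewrite !ln_mult in H4 by lra. lra.
Qed.

Lemma core_max al be a P : 0 <= al -> 0 <= be -> 0 <= a <= P ->
  ln (1 + al * a) - ln (1 + be * a) <= Rmax 0 (ln (1 + al * P) - ln (1 + be * P)).
Proof.
intros Hal Hbe [Ha HP].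
destruct (Rle_dec al be) as [Hle|Hgt].
- apply Rle_trans with 0; [|apply Rmax_l].
  assert (ln (1 + al * a) <= ln (1 + be * a)).
  { apply ln_le; nra. } lra.
- apply Rle_trans with (ln (1 + al * P) - ln (1 + be * P)); [|apply Rmax_r].
  apply lnle2; nra.
Qed.

Lemma core_mono al be a P : 0 <= be -> be <= al -> 0 <= a <= P ->
  ln (1 + al * a) - ln (1 + be * a) <= ln (1 + al * P) - ln (1 + be * P).
Proof. intros Hbe Hle [Ha HP]. apply lnle2; nra. Qed.

Lemma core_nonneg al be a : 0 <= be -> be <= al -> 0 <= a ->
  0 <= ln (1 + al * a) - ln (1 + be * a).
Proof.
intros. assert (ln (1 + be * a) <= ln (1 + al * a)) by (apply ln_le; nra). lra.
Qed.

Lemma core_pos al be a : 0 <= al -> 0 <= be -> 0 <= a ->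
  0 < ln (1 + al * a) - ln (1 + be * a) -> be < al.
Proof.
intros. destruct (Rlt_dec be al); [assumption|].
assert (ln (1 + al * a) <= ln (1 + be * a)) by (apply ln_le; nra). lra.
Qed.

Lemma Rmax_ln y : 0 < y -> Rmax 0 (ln y) = ln (Rmax 1 y).
Proof.
intros Hy. unfold Rmax. destruct (Rle_dec 0 (ln y)); destruct (Rle_dec 1 y).
- reflexivity.
- exfalso. assert (ln y < ln 1) by (apply ln_increasing; lra). erewrite ln_1 in H. lra.
- exfalso. assert (ln 1 <= ln y) by (apply ln_le; lra). erewrite ln_1 in H. lra.
- symmetry; apply ln_1.
Qed.

Lemma Rmax1_alt y : Rmax 1 y = (1 + y + Rabs (y - 1)) * / 2.
Proof.
unfold Rmax, Rabs. destruct (Rle_dec 1 y); destruct (Rcase_abs (y - 1)); field_simplify; lra.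
Qed.

Definition Gq (sg : R) (A : nat -> nat -> R) (B : nat -> R) (k1 k2 : nat -> R)
  (J q : nat) (b : nat -> R) : R :=
  (sg + sumR J (fun j => A q j * b j) + k1 q) * / (sg + sumR J (fun j => A q j * b j)) *
  ((sg + sumR J (fun j => B j * b j)) * / (sg + sumR J (fun j => B j * b j) + k2 q)).
Definition Hf (hb : bool) (y : R) : R := if hb then (1 + y + Rabs (y - 1)) * / 2 else y.
Definition Phi sg A B k1 k2 hb Q J (x : nat -> nat -> R) : R :=
  prodR Q (fun q => Hf hb (Gq sg A B k1 k2 J q (fun j => x q j))).
Definition pdom Q J (PJ : nat -> R) (useC : Prop) (Cc : nat -> nat -> R) (C0 : nat -> R)
  (x : nat -> nat -> R) : Prop :=
  (forall q j, (q < Q)%coq_nat -> (j < J)%coq_nat -> 0 <= x q j) /\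
  (forall j, (j < J)%coq_nat -> sumR Q (fun q => x q j) <= PJ j) /\
  (forall q, (q < Q)%coq_nat -> useC -> 0 <= sumR J (fun j => Cc q j * x q j) + C0 q).

Lemma pdom_ext Q J PJ useC Cc C0 x y :
  (forall q j, (q < Q)%coq_nat -> (j < J)%coq_nat -> x q j = y q j) ->
  pdom Q J PJ useC Cc C0 x -> pdom Q J PJ useC Cc C0 y.
Proof.
intros He [H1 [H2 H3]]. split; [|split].
- intros q j hq hj. erewrite <- He by assumption. auto.
- intros j hj. erewrite (sumR_ext Q (fun q => y q j) (fun q => x q j)).
  + auto.
  + intros q hq. symmetry. auto.
- intros q hq hc. erewrite (sumR_ext J (fun j => Cc q j * y q j) (fun j => Cc q j * x q j)).
  + auto.
  + intros j hj. erewrite He by assumption. reflexivity.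
Qed.

Lemma Phi_ext sg A B k1 k2 hb Q J x y :
  (forall q j, (q < Q)%coq_nat -> (j < J)%coq_nat -> x q j = y q j) ->
  Phi sg A B k1 k2 hb Q J x = Phi sg A B k1 k2 hb Q J y.
Proof.
intros He. unfold Phi. apply prodR_ext. intros q hq. unfold Gq.
erewrite (sumR_ext J (fun j => A q j * x q j) (fun j => A q j * y q j))
  by (intros; erewrite He by assumption; reflexivity).
erewrite (sumR_ext J (fun j => B j * x q j) (fun j => B j * y q j))
  by (intros; erewrite He by assumption; reflexivity).
reflexivity.
Qed.

Lemma Phi_abs sg A B k1 k2 hb Q J PJ useC Cc C0 x :
  pdom Q J PJ useC Cc C0 x ->
  Phi sg A B k1 k2 hb Q J (fun q j => Rabs (x q j)) = Phi sg A B k1 k2 hb Q J x.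
Proof.
intros [H1 _]. apply Phi_ext. intros q j hq hj. apply Rabs_right. apply Rle_ge. auto.
Qed.

Lemma pdom_bound Q J PJ useC Cc C0 x q j :
  pdom Q J PJ useC Cc C0 x -> (q < Q)%coq_nat -> (j < J)%coq_nat -> 0 <= x q j <= PJ j.
Proof.
intros [H1 [H2 _]] hq hj. split; [auto|].
apply Rle_trans with (sumR Q (fun r => x r j)); [|auto].
apply (sumR_ge_term Q (fun r => x r j)); [intros; auto | assumption].
Qed.

Lemma sumR_abs_pos sg J (A : nat -> R) (b : nat -> R) : 0 < sg ->
  (forall j, (j < J)%coq_nat -> 0 <= A j) -> 0 < sg + sumR J (fun j => A j * Rabs (b j)).
Proof.
intros hs hA. assert (0 <= sumR J (fun j => A j * Rabs (b j))).
{ apply sumR_nonneg. intros j hj. apply Rmult_le_pos; [auto | apply Rabs_pos]. }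
lra.
Qed.

Local Open Scope classical_set_scope.
Local Open Scope ring_scope.

Definition Xof (N J : nat) (r : 'rV[R]_N) (q j : nat) : R :=
  \sum_(i < N | nat_of_ord i == (q*J+j)%N) r ord0 i.
Definition rcont N J (F : (nat -> nat -> R) -> R) :=
  continuous (fun r : 'rV[R]_N => F (Xof N J r)).

Lemma rcont_cst N J c : rcont N J (fun _ => c).
Proof. move=> r; exact: cst_continuous. Qed.

Lemma rcont_coord N J q j : rcont N J (fun x => x q j).
Proof.
rewrite /rcont /Xof.
apply: continuous_big.
  have := @add_continuous R^o; exact.
move=> i _; exact: coord_continuous.
Qed.

Lemma rcont_add N J F G : rcont N J F -> rcont N J G ->
  rcont N J (fun x => Rplus (F x) (G x)).
Proof. move=> hF hG r; exact: (@continuousD _ R^o _ _ _ _ (hF r) (hG r)). Qed.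

Lemma rcont_mul N J F G : rcont N J F -> rcont N J G ->
  rcont N J (fun x => Rmult (F x) (G x)).
Proof. move=> hF hG r; exact: (@continuousM R _ _ _ r (hF r) (hG r)). Qed.

Lemma rcont_inv N J F : rcont N J F -> (forall x, F x <> IZR Z0) ->
  rcont N J (fun x => Rinv (F x)).
Proof.
move=> hF hne r. have h1 : F (Xof N J r) != 0 by apply/eqP/hne.
have := (@continuousV R _ (fun r => F (Xof N J r)) r h1 (hF r)). exact.
Qed.

Lemma rcont_abs N J F : rcont N J F -> rcont N J (fun x => Rabs (F x)).
Proof.
move=> hF r.
have -> : (fun r : 'rV[R]_N => Rabs (F (Xof N J r))) = (fun r => `|F (Xof N J r)|).
  by apply: funext => y; rewrite RabsE.
apply: continuous_comp; first exact: hF.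
exact: (@norm_continuous _ R^o).
Qed.

Lemma rcont_sumR N J n (F : nat -> (nat -> nat -> R) -> R) :
  (forall k, rcont N J (F k)) -> rcont N J (fun x => sumR n (fun k => F k x)).
Proof.
move=> hF; elim: n => [|n IH] /=; first exact: rcont_cst.
exact: rcont_add.
Qed.

Lemma rcont_prodR N J n (F : nat -> (nat -> nat -> R) -> R) :
  (forall k, rcont N J (F k)) -> rcont N J (fun x => prodR n (fun k => F k x)).
Proof.
move=> hF; elim: n => [|n IH] /=; first exact: rcont_cst.
exact: rcont_mul.
Qed.

Lemma closed_Rle N J F G : rcont N J F -> rcont N J G ->
  closed [set r : 'rV[R]_N | Rle (F (Xof N J r)) (G (Xof N J r))].
Proof.
move=> hF hG.
have -> : [set r : 'rV[R]_N | Rle (F (Xof N J r)) (G (Xof N J r))] =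
  (fun r => G (Xof N J r) - F (Xof N J r)) @^-1` [set y : R | 0 <= y].
  apply/seteqP; split => r /=.
    by move/RleP; rewrite subr_ge0.
  by rewrite subr_ge0 => /RleP.
apply: preimage_closed; last exact: closed_ge.
move=> r _; have := (@continuousB _ R^o _ _ _ _ (hG r) (hF r)); exact.
Qed.

Lemma closed_forall N (I : Type) (P : I -> 'rV[R]_N -> Prop) :
  (forall k, closed [set r | P k r]) -> closed [set r | forall k, P k r].
Proof.
move=> h.
have -> : [set r | forall k, P k r] = \bigcap_(k in setT) [set r | P k r].
  apply/seteqP; split=> r /= H k; first by move=> _; exact: H.
  exact: (H k Logic.I).
by apply: closed_bigI => k _; exact: h.
Qed.

Lemma closed_imp N (P : Prop) (S : 'rV[R]_N -> Prop) :
  closed [set r | S r] -> closed [set r | P -> S r].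
Proof.
move=> h; case: (pselect P) => HP.
  have -> : [set r | P -> S r] = [set r | S r].
    apply/seteqP; split => r /= H; [exact: H HP | by move=> _].
  exact: h.
have -> : [set r | P -> S r] = setT.
  by apply/seteqP; split => r //= _ /HP.
exact: closedT.
Qed.

Lemma closed_and N (S T : 'rV[R]_N -> Prop) :
  closed [set r | S r] -> closed [set r | T r] -> closed [set r | S r /\ T r].
Proof. move=> h1 h2; exact: (closedI h1 h2). Qed.

Lemma gen_max N J (K : (nat -> nat -> R) -> Prop) (F : (nat -> nat -> R) -> R)
  (lo hi : 'I_N -> R) :
  rcont N J F -> closed [set r : 'rV[R]_N | K (Xof N J r)] ->
  (forall r : 'rV[R]_N, K (Xof N J r) -> forall i, lo i <= r ord0 i <= hi i) ->
  (exists r : 'rV[R]_N, K (Xof N J r)) ->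
  exists r : 'rV[R]_N, K (Xof N J r) /\
    forall r' : 'rV[R]_N, K (Xof N J r') -> Rle (F (Xof N J r')) (F (Xof N J r)).
Proof.
move=> hF hK hb [r0 Kr0].
have cA : compact [set r : 'rV[R]_N | K (Xof N J r)].
  have cB := @rV_compact R N (fun i => `[lo i, hi i]%classic) (fun i => @segment_compact R (lo i) (hi i)).
  apply: (subclosed_compact hK cB).
  move=> r /= Kr i; rewrite /= in_itv /=; exact: hb.
have ne : [set r : 'rV[R]_N | K (Xof N J r)] !=set0 by exists r0.
have [c cA' hmax] := @EVT_max_rV R N (fun r => F (Xof N J r)) _ ne cA
  (continuous_subspaceT hF).
exists c; split; first by move: cA'; rewrite inE.
move=> r' Kr'; apply/RleP; apply: hmax; rewrite inE; exact: Kr'.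
Qed.

Local Close Scope ring_scope.

Lemma rcont_sumR' N J n (F : nat -> (nat -> nat -> R) -> R) :
  (forall k, (k < n)%coq_nat -> rcont N J (F k)) ->
  rcont N J (fun x => sumR n (fun k => F k x)).
Proof.
elim: n => [|n IH] hF /=; first exact: rcont_cst.
apply: rcont_add; first by apply: IH => k hk; apply: hF; lia.
apply: hF; lia.
Qed.

Lemma rcont_prodR' N J n (F : nat -> (nat -> nat -> R) -> R) :
  (forall k, (k < n)%coq_nat -> rcont N J (F k)) ->
  rcont N J (fun x => prodR n (fun k => F k x)).
Proof.
elim: n => [|n IH] hF /=; first exact: rcont_cst.
apply: rcont_mul; first by apply: IH => k hk; apply: hF; lia.
apply: hF; lia.
Qed.

Definition row_of (Q J : nat) (x : nat -> nat -> R) : 'rV[R]_(Q * J) :=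
  \row_(i < Q * J) x (i %/ J)%N (i %% J)%N.

Lemma Xof_idx N J (r : 'rV[R]_N) (k : 'I_N) q j :
  nat_of_ord k = (q * J + j)%N -> Xof N J r q j = r ord0 k.
Proof.
move=> hk; rewrite /Xof (big_pred1 k) // => i /=.
by rewrite -hk.
Qed.

Lemma Xof_row Q J x q j : (q < Q)%coq_nat -> (j < J)%coq_nat ->
  Xof (Q * J) J (row_of Q J x) q j = x q j.
Proof.
move=> /ssrnat.ltP hq /ssrnat.ltP hj.
have hk : (q * J + j < Q * J)%N.
  apply: (@leq_trans (q.+1 * J)); first by rewrite mulSn addnC ltn_add2r.
  by rewrite leq_mul2r hq orbT.
rewrite (@Xof_idx _ _ _ (Ordinal hk)) // mxE /=.
have J0 : (0 < J)%N by apply: leq_ltn_trans hj.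
by rewrite divnMDl // divn_small // addn0 modnMDl modn_small.
Qed.

Lemma Xof_ord Q J (r : 'rV[R]_(Q * J)) (k : 'I_(Q * J)) :
  Xof (Q * J) J r (k %/ J)%N (k %% J)%N = r ord0 k.
Proof. by apply: Xof_idx; rewrite -divn_eq. Qed.

Lemma pot_exists Q J PJ useC Cc C0 sg A B k1 k2 hb :
  (0 < J)%coq_nat -> Rlt 0 sg ->
  (forall q j, (q < Q)%coq_nat -> (j < J)%coq_nat -> Rle 0 (A q j)) ->
  (forall j, (j < J)%coq_nat -> Rle 0 (B j)) ->
  (forall q, (q < Q)%coq_nat -> Rle 0 (k1 q)) ->
  (forall q, (q < Q)%coq_nat -> Rle 0 (k2 q)) ->
  (exists x, pdom Q J PJ useC Cc C0 x) ->
  exists x, pdom Q J PJ useC Cc C0 x /\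
    forall x', pdom Q J PJ useC Cc C0 x' ->
      Rle (Phi sg A B k1 k2 hb Q J x') (Phi sg A B k1 k2 hb Q J x).
Proof.
move=> hJ hs hA hB hk1 hk2 [x0 hx0].
have hJ' : (0 < J)%N by apply/ssrnat.ltP.
have := @gen_max (Q * J) J (pdom Q J PJ useC Cc C0)
  (fun x => Phi sg A B k1 k2 hb Q J (fun q j => Rabs (x q j)))
  (fun _ => 0) (fun i => PJ (i %% J)%N).
case.
-
  rewrite /Phi. apply: rcont_prodR' => q hq.
  have hD : rcont (Q * J) J (fun x => sg + sumR J (fun j => A q j * Rabs (x q j))).
    apply: rcont_add; first exact: rcont_cst.
    apply: rcont_sumR => j; apply: rcont_mul; first exact: rcont_cst.
    apply: rcont_abs; exact: rcont_coord.
  have hE : rcont (Q * J) J (fun x => sg + sumR J (fun j => B j * Rabs (x q j))).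
    apply: rcont_add; first exact: rcont_cst.
    apply: rcont_sumR => j; apply: rcont_mul; first exact: rcont_cst.
    apply: rcont_abs; exact: rcont_coord.
  have hG : rcont (Q * J) J (fun x => Gq sg A B k1 k2 J q (fun j => Rabs (x q j))).
    rewrite /Gq; apply: rcont_mul; apply: rcont_mul.
    + apply: rcont_add; [exact: hD | exact: rcont_cst].
    + apply: rcont_inv; first exact: hD.
      move=> x; apply: Rgt_not_eq; apply: sumR_abs_pos => // j hj; exact: hA.
    + exact: hE.
    + apply: rcont_inv; first by apply: rcont_add; [exact: hE | exact: rcont_cst].
      move=> x; apply: Rgt_not_eq.
      have := sumR_abs_pos sg J B (fun j => x q j) hs hB.
      have := hk2 q hq. rewrite /Rgt. move=> ? ?. lra.
  case: hb; rewrite /Hf; last exact: hG.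
  apply: rcont_mul; last exact: rcont_cst.
  apply: rcont_add; first by apply: rcont_add; [exact: rcont_cst | exact: hG].
  apply: rcont_abs; rewrite /Rminus; apply: rcont_add; [exact: hG | exact: rcont_cst].
-
  rewrite /pdom; apply: closed_and; last apply: closed_and.
  + apply: closed_forall => q; apply: closed_forall => j.
    apply: closed_imp; apply: closed_imp.
    exact: (@closed_Rle _ _ (fun _ => 0) (fun x => x q j) (rcont_cst _ _ _) (rcont_coord _ _ _ _)).
  + apply: closed_forall => j; apply: closed_imp.
    apply: (@closed_Rle _ _ (fun x => sumR Q (fun q => x q j)) (fun _ => PJ j)); last exact: rcont_cst.
    apply: rcont_sumR => q; exact: rcont_coord.
  + apply: closed_forall => q; apply: closed_imp; apply: closed_imp.
    apply: (@closed_Rle _ _ (fun _ => 0) (fun x => sumR J (fun j => Cc q j * x q j) + C0 q)); first exact: rcont_cst.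
    apply: rcont_add; last exact: rcont_cst.
    apply: rcont_sumR => j; apply: rcont_mul; [exact: rcont_cst | exact: rcont_coord].
-
  move=> r Kr i.
  have hq : ((i %/ J) < Q)%coq_nat by apply/ssrnat.ltP; rewrite ltn_divLR.
  have hj : ((i %% J) < J)%coq_nat by apply/ssrnat.ltP; rewrite ltn_mod.
  have [h1 h2] := pdom_bound _ _ _ _ _ _ _ _ _ Kr hq hj.
  rewrite Xof_ord in h1 h2.
  by apply/andP; split; apply/RleP.
-
  exists (row_of Q J x0); apply: pdom_ext hx0 => q j hq hj.
  by rewrite Xof_row.
move=> r [Kr hmax]; exists (Xof (Q * J) J r); split => // x' hx'.
have Kr' : pdom Q J PJ useC Cc C0 (Xof (Q * J) J (row_of Q J x')).
  apply: pdom_ext hx' => q j hq hj; by rewrite Xof_row.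
have := hmax _ Kr'.
rewrite (Phi_abs _ _ _ _ _ _ _ _ _ _ _ _ _ Kr') (Phi_abs _ _ _ _ _ _ _ _ _ _ _ _ _ Kr).
rewrite (@Phi_ext _ _ _ _ _ _ _ _ (Xof (Q * J) J (row_of Q J x')) x') //.
move=> q j hq hj; exact: Xof_row.
Qed.

Definition Aof (s : sys) := fun q j => HJD s j q.
Definition Bof (s : sys) := fun j => HJE s j.
Definition k1f (s : sys) := fun q => HSD s q * Pmax s q.
Definition k2f (s : sys) := fun q => HSE s q * Pmax s q.
Definition Ccf (s : sys) := fun q j => HSD s q * HJE s j - HSE s q * HJD s j q.
Definition C0f (s : sys) := fun q => (HSD s q - HSE s q) * sigma2 s.
Definition GG (s : sys) q b := Gq (sigma2 s) (Aof s) (Bof s) (k1f s) (k2f s) (J s) q b.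

Definition Dq s q b := sigma2 s + sumR (J s) (fun j => HJD s j q * b j).
Definition Eq s b := sigma2 s + sumR (J s) (fun j => HJE s j * b j).

Definition bnn (s : sys) (b : nat -> R) := forall j, (j < J s)%coq_nat -> 0 <= b j.

Lemma D_pos s q b : admissible s -> (q < Q s)%coq_nat -> bnn s b -> 0 < Dq s q b.
Proof.
intros [HQ [HJ [Hs [Hq Hj]]]] hq hb. unfold Dq.
assert (0 <= sumR (J s) (fun j => HJD s j q * b j)).
{ apply sumR_nonneg. intros j hj. apply Rmult_le_pos; [|apply hb; exact hj].
  destruct (Hj j hj) as [_ [_ HH]]. left. apply HH. exact hq. }
lra.
Qed.

Lemma E_pos s b : admissible s -> bnn s b -> 0 < Eq s b.
Proof.
intros [HQ [HJ [Hs [Hq Hj]]]] hb. unfold Eq.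
assert (0 <= sumR (J s) (fun j => HJE s j * b j)).
{ apply sumR_nonneg. intros j hj. apply Rmult_le_pos; [|apply hb; exact hj].
  destruct (Hj j hj) as [_ [HH _]]. left. exact HH. }
lra.
Qed.

Lemma rt_form s q a b :
  rs_tilde s q a b =
  ln (1 + (HSD s q / Dq s q b) * a) - ln (1 + (HSE s q / Eq s b) * a).
Proof.
unfold rs_tilde, r_qq, r_qe, Dq, Eq.
replace (HSD s q * a / (sigma2 s + sumR (J s) (fun j => HJD s j q * b j)))
  with (HSD s q / (sigma2 s + sumR (J s) (fun j => HJD s j q * b j)) * a)
  by (unfold Rdiv; ring).
replace (HSE s q * a / (sigma2 s + sumR (J s) (fun j => HJE s j * b j)))
  with (HSE s q / (sigma2 s + sumR (J s) (fun j => HJE s j * b j)) * a)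
  by (unfold Rdiv; ring).
reflexivity.
Qed.

Lemma al_nn s q b : admissible s -> (q < Q s)%coq_nat -> bnn s b -> 0 <= HSD s q / Dq s q b.
Proof.
intros Ha hq hb. pose proof (D_pos s q b Ha hq hb).
destruct Ha as [_ [_ [_ [Hq _]]]]. destruct (Hq q hq) as [_ [HH _]].
unfold Rdiv. apply Rmult_le_pos; [lra|]. left; apply Rinv_0_lt_compat; lra.
Qed.

Lemma be_nn s q b : admissible s -> (q < Q s)%coq_nat -> bnn s b -> 0 <= HSE s q / Eq s b.
Proof.
intros Ha hq hb. pose proof (E_pos s b Ha hb).
destruct Ha as [_ [_ [_ [Hq _]]]]. destruct (Hq q hq) as [_ [_ HH]].
unfold Rdiv. apply Rmult_le_pos; [lra|]. left; apply Rinv_0_lt_compat; lra.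
Qed.

Lemma Cq_form s q b :
  sumR (J s) (fun j => (HSD s q * HJE s j - HSE s q * HJD s j q) * b j)
  + (HSD s q - HSE s q) * sigma2 s = HSD s q * Eq s b - HSE s q * Dq s q b.
Proof.
unfold Eq, Dq.
pose proof (sumR_lin (J s) (HSD s q) (HSE s q) (fun j => HJE s j) (fun j => HJD s j q) b) as H.
simpl in H. erewrite H. ring.
Qed.

Lemma Cq_le s q b : admissible s -> (q < Q s)%coq_nat -> bnn s b ->
  Cq s q b -> HSE s q / Eq s b <= HSD s q / Dq s q b.
Proof.
intros Ha hq hb HC. unfold Cq in HC. erewrite Cq_form in HC.
pose proof (D_pos s q b Ha hq hb). pose proof (E_pos s b Ha hb).
set (D := Dq s q b) in *. set (E := Eq s b) in *.
assert (HSD s q / D - HSE s q / E = (HSD s q * E - HSE s q * D) * / (D * E)) as Hx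
  by (field; lra).
assert (0 <= (HSD s q * E - HSE s q * D) * / (D * E)).
{ apply Rmult_le_pos; [lra|]. left. apply Rinv_0_lt_compat. apply Rmult_lt_0_compat; lra. }
lra.
Qed.

Lemma Cq_of_lt s q b : admissible s -> (q < Q s)%coq_nat -> bnn s b ->
  HSE s q / Eq s b < HSD s q / Dq s q b -> Cq s q b.
Proof.
intros Ha hq hb Hlt. unfold Cq. erewrite Cq_form.
pose proof (D_pos s q b Ha hq hb). pose proof (E_pos s b Ha hb).
set (D := Dq s q b) in *. set (E := Eq s b) in *.
assert (HSD s q * E - HSE s q * D = (HSD s q / D - HSE s q / E) * (D * E)) as Hx
  by (field; lra).
erewrite Hx. left. apply Rmult_lt_0_compat; [lra|]. apply Rmult_lt_0_compat; lra.
Qed.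

Lemma GG_ln s q b : admissible s -> (q < Q s)%coq_nat -> bnn s b ->
  ln (GG s q b) = rs_tilde s q (Pmax s q) b.
Proof.
intros Ha hq hb. erewrite rt_form.
pose proof (D_pos s q b Ha hq hb). pose proof (E_pos s b Ha hb).
pose proof (al_nn s q b Ha hq hb). pose proof (be_nn s q b Ha hq hb).
destruct Ha as [_ [_ [_ [Hq _]]]]. destruct (Hq q hq) as [HP [HD HE]].
assert (0 <= HSE s q / Eq s b * Pmax s q) as Hp1 by (apply Rmult_le_pos; lra).
assert (0 <= HSD s q / Dq s q b * Pmax s q) as Hp2 by (apply Rmult_le_pos; lra).
assert (GG s q b = (1 + HSD s q / Dq s q b * Pmax s q) * / (1 + HSE s q / Eq s b * Pmax s q)) as Hg.
{ unfold GG, Gq, Aof, Bof, k1f, k2f. fold (Dq s q b). fold (Eq s b).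
  field. split; [|split]; try lra. all: nra. }
erewrite Hg. erewrite ln_mult; [| lra | apply Rinv_0_lt_compat; lra].
erewrite ln_Rinv by lra. ring.
Qed.

Lemma GG_pos s q b : admissible s -> (q < Q s)%coq_nat -> bnn s b -> 0 < GG s q b.
Proof.
intros Ha hq hb.
pose proof (D_pos s q b Ha hq hb). pose proof (E_pos s b Ha hb).
destruct Ha as [_ [_ [_ [Hq _]]]]. destruct (Hq q hq) as [HP [HD HE]].
unfold GG, Gq, Aof, Bof, k1f, k2f. fold (Dq s q b). fold (Eq s b).
apply Rmult_lt_0_compat; apply Rmult_lt_0_compat; try nra;
  apply Rinv_0_lt_compat; nra.
Qed.

Lemma Hf_pos hb y : 0 < y -> 0 < Hf hb y.
Proof.
intros Hy. unfold Hf. destruct hb; [|exact Hy].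
erewrite <- Rmax1_alt. apply Rlt_le_trans with 1; [lra | apply Rmax_l].
Qed.

Lemma sumR_zero n : sumR n (fun _ => 0) = 0.
Proof. induction n as [|n IH]; simpl; [reflexivity|]. erewrite IH. ring. Qed.

Lemma Phi_dev sg A B k1 k2 hb Q J x b q : (q < Q)%coq_nat ->
  (forall r, (r < Q)%coq_nat -> 0 < Hf hb (Gq sg A B k1 k2 J r (fun j => x r j))) ->
  0 < Hf hb (Gq sg A B k1 k2 J q b) ->
  Phi sg A B k1 k2 hb Q J (fun r j => if Nat.eqb r q then b j else x r j)
    <= Phi sg A B k1 k2 hb Q J x ->
  Hf hb (Gq sg A B k1 k2 J q b) <= Hf hb (Gq sg A B k1 k2 J q (fun j => x q j)).
Proof.
intros hq Hp Hb Hle. unfold Phi in Hle.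
erewrite (prodR_split Q (fun q0 => Hf hb (Gq sg A B k1 k2 J q0 (fun j => x q0 j))) q hq) in Hle.
erewrite (prodR_split Q (fun q0 => Hf hb (Gq sg A B k1 k2 J q0
            (fun j => if Nat.eqb q0 q then b j else x q0 j))) q hq) in Hle.
cbv beta in Hle. erewrite Nat.eqb_refl in Hle.
assert (Hrest : prodR Q (fun r => if Nat.eqb r q then 1 else
           Hf hb (Gq sg A B k1 k2 J r (fun j => if Nat.eqb r q then b j else x r j)))
         = prodR Q (fun r => if Nat.eqb r q then 1 else
           Hf hb (Gq sg A B k1 k2 J r (fun j => x r j)))).
{ apply prodR_ext. intros r hr. destruct (Nat.eqb r q); reflexivity. }
erewrite Hrest in Hle.
assert (Hpos : 0 < prodR Q (fun r => if Nat.eqb r q then 1 else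
           Hf hb (Gq sg A B k1 k2 J r (fun j => x r j)))).
{ apply prodR_pos. intros r hr. destruct (Nat.eqb r q); [lra | apply Hp; exact hr]. }
apply Rmult_le_reg_r with (1 := Hpos). exact Hle.
Qed.

Theorem proposition1 (s : sys) (Hs : admissible s) :
  (exists p pJ, GNE_G s p pJ) /\
  ((exists p pJ, in_P s p pJ) -> exists p pJ, GNE_Gsm s p pJ) /\
  (forall p pJ, GNE_G s p pJ ->
     (forall q, (q < Q s)%coq_nat -> Cq s q (fun j => pJ j q)) -> GNE_Gsm s p pJ) /\
  (forall p pJ, GNE_Gsm s p pJ -> GNE_G s p pJ).
Proof.
pose proof Hs as Ha. destruct Hs as [HQ [HJ [Hsg [Hq Hj]]]].
assert (HJ' : (0 < J s)%coq_nat) by lia.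
assert (HA : forall q j, (q < Q s)%coq_nat -> (j < J s)%coq_nat -> 0 <= Aof s q j).
{ intros q j hq hj. unfold Aof. destruct (Hj j hj) as [_ [_ H]]. left; apply H; exact hq. }
assert (HB : forall j, (j < J s)%coq_nat -> 0 <= Bof s j).
{ intros j hj. unfold Bof. destruct (Hj j hj) as [_ [H _]]. left; exact H. }
assert (Hk1 : forall q, (q < Q s)%coq_nat -> 0 <= k1f s q).
{ intros q hq. unfold k1f. destruct (Hq q hq) as [H1 [H2 _]]. left; apply Rmult_lt_0_compat; assumption. }
assert (Hk2 : forall q, (q < Q s)%coq_nat -> 0 <= k2f s q).
{ intros q hq. unfold k2f. destruct (Hq q hq) as [H1 [_ H2]]. left; apply Rmult_lt_0_compat; assumption. }
split; [|split; [|split]].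
-
  assert (Hne : exists x, pdom (Q s) (J s) (PJmax s) False (Ccf s) (C0f s) x).
  { exists (fun _ _ => 0). split; [|split].
    - intros; lra.
    - intros j hj. erewrite sumR_zero. destruct (Hj j hj) as [H _]. lra.
    - intros q hq []. }
  destruct (pot_exists (Q s) (J s) (PJmax s) False (Ccf s) (C0f s) (sigma2 s)
     (Aof s) (Bof s) (k1f s) (k2f s) true HJ' Hsg HA HB Hk1 Hk2 Hne) as [x [Hx Hmax]].
  exists (fun q => Pmax s q), (fun j r => x r j).
  intros q hq. destruct (Hq q hq) as [HP [HD HE]].
  assert (Hxq : bnn s (fun j => x q j)) by (intros j hj; apply (proj1 Hx); assumption).
  split.
  + split; [lra|split; [lra|]]. intros j hj. split; [apply (proj1 Hx); assumption|].
    erewrite (sumR_ext _ _ (fun r => x r j)); [apply (proj1 (proj2 Hx)); exact hj|].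
    intros r hr. destruct (Nat.eqb_spec r q); [subst; reflexivity | reflexivity].
  + intros a b [Ha0 [HaP Hb]].
    assert (Hbn : bnn s b) by (intros j hj; apply (Hb j hj)).
    assert (Hx' : pdom (Q s) (J s) (PJmax s) False (Ccf s) (C0f s)
                   (fun r j => if Nat.eqb r q then b j else x r j)).
    { split; [|split].
      - intros r j hr hj. destruct (Nat.eqb r q); [apply Hbn; exact hj | apply (proj1 Hx); assumption].
      - intros j hj. exact (proj2 (Hb j hj)).
      - intros r hr []. }
    assert (Hdev : Hf true (GG s q b) <= Hf true (GG s q (fun j => x q j))).
    { apply (Phi_dev (sigma2 s) (Aof s) (Bof s) (k1f s) (k2f s) true (Q s) (J s) x b q hq).
      - intros r hr. apply Hf_pos. apply (GG_pos s r (fun j => x r j) Ha hr).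
        intros j hj; apply (proj1 Hx); assumption.
      - apply Hf_pos. apply (GG_pos s q b Ha hq Hbn).
      - apply Hmax. exact Hx'. }
    unfold Hf in Hdev. erewrite <- !Rmax1_alt in Hdev.
    unfold rs.
    assert (H1 : rs_tilde s q a b <= Rmax 0 (rs_tilde s q (Pmax s q) b)).
    { erewrite rt_form. erewrite rt_form. apply core_max;
        [apply al_nn; assumption | apply be_nn; assumption | lra]. }
    assert (H2 : Rmax 0 (rs_tilde s q (Pmax s q) b)
                 <= Rmax 0 (rs_tilde s q (Pmax s q) (fun j => x q j))).
    { erewrite <- (GG_ln s q b Ha hq Hbn).
      erewrite <- (GG_ln s q (fun j => x q j) Ha hq Hxq).
      erewrite (Rmax_ln (GG s q b)) by (apply GG_pos; assumption).
      erewrite (Rmax_ln (GG s q (fun j => x q j))) by (apply GG_pos; assumption).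
      apply ln_le; [|exact Hdev].
      apply Rlt_le_trans with 1; [lra | apply Rmax_l]. }
    apply Rmax_lub; [apply Rmax_l|].
    pose proof (Rmax_l 0 (rs_tilde s q (Pmax s q) (fun j => x q j))). lra.
-
  intros [p0 [pJ0 [HP1 HP2]]].
  assert (Hne : exists x, pdom (Q s) (J s) (PJmax s) True (Ccf s) (C0f s) x).
  { exists (fun r j => pJ0 j r). split; [|split].
    - intros r j hr hj. apply (proj1 (HP2 j hj) r hr).
    - intros j hj. exact (proj2 (HP2 j hj)).
    - intros r hr _. destruct (HP1 r hr) as [_ [_ HC]]. apply Rge_le. exact HC. }
  destruct (pot_exists (Q s) (J s) (PJmax s) True (Ccf s) (C0f s) (sigma2 s)
     (Aof s) (Bof s) (k1f s) (k2f s) false HJ' Hsg HA HB Hk1 Hk2 Hne) as [x [Hx Hmax]].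
  exists (fun q => Pmax s q), (fun j r => x r j).
  intros q hq. destruct (Hq q hq) as [HP [HD HE]].
  assert (Hxq : bnn s (fun j => x q j)) by (intros j hj; apply (proj1 Hx); assumption).
  split.
  + split.
    * split; [lra|split; [lra|]]. intros j hj. split; [apply (proj1 Hx); assumption|].
      erewrite (sumR_ext _ _ (fun r => x r j)); [apply (proj1 (proj2 Hx)); exact hj|].
      intros r hr. destruct (Nat.eqb_spec r q); [subst; reflexivity | reflexivity].
    * apply Rle_ge. apply (proj2 (proj2 Hx) q hq I).
  + intros a b [[Ha0 [HaP Hb]] HCb].
    assert (Hbn : bnn s b) by (intros j hj; apply (Hb j hj)).
    assert (Hx' : pdom (Q s) (J s) (PJmax s) True (Ccf s) (C0f s)
                   (fun r j => if Nat.eqb r q then b j else x r j)).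
    { split; [|split].
      - intros r j hr hj. destruct (Nat.eqb r q); [apply Hbn; exact hj | apply (proj1 Hx); assumption].
      - intros j hj. exact (proj2 (Hb j hj)).
      - intros r hr _. destruct (Nat.eqb_spec r q) as [->|Hne'].
        + apply Rge_le. exact HCb.
        + apply (proj2 (proj2 Hx) r hr I). }
    assert (Hdev : Hf false (GG s q b) <= Hf false (GG s q (fun j => x q j))).
    { apply (Phi_dev (sigma2 s) (Aof s) (Bof s) (k1f s) (k2f s) false (Q s) (J s) x b q hq).
      - intros r hr. apply Hf_pos. apply (GG_pos s r (fun j => x r j) Ha hr).
        intros j hj; apply (proj1 Hx); assumption.
      - apply Hf_pos. apply (GG_pos s q b Ha hq Hbn).
      - apply Hmax. exact Hx'. }
    unfold Hf in Hdev.
    assert (H1 : rs_tilde s q a b <= rs_tilde s q (Pmax s q) b).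
    { erewrite rt_form. erewrite rt_form. apply core_mono;
        [apply be_nn; assumption | apply Cq_le; assumption | lra]. }
    assert (H2 : rs_tilde s q (Pmax s q) b <= rs_tilde s q (Pmax s q) (fun j => x q j)).
    { erewrite <- (GG_ln s q b Ha hq Hbn).
      erewrite <- (GG_ln s q (fun j => x q j) Ha hq Hxq).
      apply ln_le; [apply GG_pos; assumption | exact Hdev]. }
    lra.
-
  intros p pJ HG HC q hq. destruct (HG q hq) as [Hfe Hopt].
  split; [split; [exact Hfe | exact (HC q hq)]|].
  intros a b [Hfb HCb]. pose proof (Hopt a b Hfb) as Hle. unfold rs in Hle.
  destruct Hfe as [Hp0 [HpP Hb]].
  assert (Hbn : bnn s (fun j => pJ j q)) by (intros j hj; apply (Hb j hj)).
  assert (Hnn : 0 <= rs_tilde s q (p q) (fun j => pJ j q)).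
  { erewrite rt_form. apply core_nonneg;
      [apply be_nn; assumption | apply Cq_le; [assumption|assumption|assumption|exact (HC q hq)] | exact Hp0]. }
  erewrite (Rmax_right 0 (rs_tilde s q (p q) (fun j => pJ j q)) Hnn) in Hle.
  pose proof (Rmax_r 0 (rs_tilde s q a b)). lra.
-
  intros p pJ HG q hq. destruct (HG q hq) as [[Hfe HC] Hopt].
  split; [exact Hfe|].
  intros a b Hfb. unfold rs. apply Rmax_lub; [apply Rmax_l|].
  destruct (Rle_dec (rs_tilde s q a b) 0) as [Hn|Hp].
  + apply Rle_trans with 0; [exact Hn | apply Rmax_l].
  + apply Rle_trans with (rs_tilde s q (p q) (fun j => pJ j q)); [|apply Rmax_r].
    apply Hopt. split; [exact Hfb|].
    destruct Hfb as [Ha0 [HaP Hb]].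
    assert (Hbn : bnn s b) by (intros j hj; apply (Hb j hj)).
    apply Cq_of_lt; [assumption|assumption|assumption|].
    apply Rnot_le_lt in Hp. erewrite rt_form in Hp.
    apply (core_pos _ _ a); [apply al_nn; assumption | apply be_nn; assumption | exact Ha0 | exact Hp].
Qed.
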